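(* Let $K$ be a division ring and $M,N\ge2$ integers. Suppose that for every group $\Gamma=\Gamma_\pi\in\bigcup_{2\le m\le M,\ 2\le n\le N}\mathrm{ULIE}^{(2)}_K(m,n)$, with its canonical generators $1=a_0,a_1,\dots,a_{m-1}$ and $1=b_0,b_1,\dots,b_{n-1}$ and with $\phi:\Gamma\to\Gamma/N_{\mathrm{tor}}(\Gamma)$ the quotient map, we have $\phi(a_i)=\phi(a_{i'})$ for some $0\le i<i'\le m-1$ or $\phi(b_j)=\phi(b_{j'})$ for some $0\le j<j'\le n-1$. Then for every torsion-free group $G$ there are no $a,b\in K[G]$ with $\operatorname{rank}(a)=M$, $\operatorname{rank}(b)=N$ and $ab=1$.
   Context: $K$ is a nonzero division ring, $K[G]$ the group ring, rank = number of group elements with nonzero coefficient. For $m,n\ge2$ and a partition $\pi$ of $S_{m,n}=\{0,\dots,m-1\}\times\{0,\dots,n-1\}$, $(i,j)\sim_\pi(i',j')$ means same block; $\Gamma_\pi$ is the group with canonical generators $a_0,\dots,a_{m-1},b_0,\dots,b_{n-1}$ and relations $a_0=b_0=1$, $a_ib_j=a_{i'}b_{j'}$ whenever $(i,j)\sim_\pi(i',j')$. $\pi$ is nondegenerate if in $\Gamma_\pi$ the $a_i$ are pairwise distinct and the $b_j$ pairwise distinct. $\pi$ is realizable with nonzero $r_0,\dots,s_{n-1}\in K$ if for each block $E$, $\sum_{(i,j)\in E}r_is_j$ equals $1$ if $(0,0)\in E$, else $0$; ordering partitions by refinement, $\pi$ is minimally realizable over $K$ if for some choice of nonzero elements of $K$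 it is minimal among partitions realizable with them. An invariant subgrid of $\pi$ is $(R,C)$ with $0\in R\subseteq\{0,\dots,m-1\}$, $0\in C\subseteq\{0,\dots,n-1\}$, $|R|,|C|\ge2$, such that $(i,j)\in R\times C$ and $(i,j)\sim_\pi(i',j')$ imply $(i',j')\in R\times C$; it is proper if $|R|<m$ or $|C|<n$. $\mathrm{ULIE}^{(2)}_K(m,n)$ is the set of $\Gamma_\pi$ with $\pi$ nondegenerate, minimally realizable over $K$, and without proper invariant subgrids. For a group $\Gamma$, $N^{(1)}_{\mathrm{tor}}(\Gamma)$ is the smallest normal subgroup containing all elements of finite order; $N_{\mathrm{tor},1}=N^{(1)}_{\mathrm{tor}}(\Gamma)$, $N_{\mathrm{tor},k+1}=\phi_k^{-1}(N^{(1)}_{\mathrm{tor}}(\Gamma/N_{\mathrm{tor},k}))$ with $\phi_k$ the quotient map $\Gamma\to\Gamma/N_{\mathrm{tor},k}$, and $N_{\mathrm{tor}}(\Gamma)=\bigcup_kN_{\mathrm{tor},k}$. *)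

(* Defs.v *)
From HB Require Import structures.
From mathcomp Require Import all_boot all_order all_algebra.
From Stdlib Require List.
Set Implicit Arguments. Unset Strict Implicit. Unset Printing Implicit Defensive.
Import GRing.Theory.
Local Open Scope ring_scope.

Record group := Group {
  gcar :> Type;
  gmul : gcar -> gcar -> gcar;
  gone : gcar;
  ginv : gcar -> gcar;
  gmulA : forall x y z, gmul x (gmul y z) = gmul (gmul x y) z;
  gmul1g : forall x, gmul gone x = x;
  gmulVg : forall x, gmul (ginv x) x = gone }.
Arguments gmul {g}. Arguments gone {g}. Arguments ginv {g}.

Fixpoint gpow (G : group) (x : G) (n : nat) : G :=
  match n with 0 => gone | k.+1 => gmul x (gpow x k) end.

Definition torsion_free (G : group) : Prop :=
  forall (x : G) (n : nat), (0 < n)%N -> gpow x n = gone -> x = gone.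

Definition group_hom (G H : group) (f : G -> H) : Prop :=
  forall x y, f (gmul x y) = gmul (f x) (f y).

Definition normal_subgroup (G : group) (P : G -> Prop) : Prop :=
  [/\ P gone, (forall x y, P x -> P y -> P (gmul x y)),
      (forall x, P x -> P (ginv x)) &
      (forall x g, P x -> P (gmul (ginv g) (gmul x g)))].

Definition normal_closure (G : group) (S : G -> Prop) (x : G) : Prop :=
  forall P, normal_subgroup P -> (forall y, S y -> P y) -> P x.

(** N_{tor,k}: N_{tor,0} = 1 ; N_{tor,k+1} = preimage of N^{(1)}_tor(G/N_{tor,k}),
    i.e. the normal closure of the x whose image in G/N_{tor,k} has finite
    order, i.e. with x^n in N_{tor,k} for some n >= 1. *)
Fixpoint Ntor_k (G : group) (k : nat) : G -> Prop :=
  match k with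
  | 0 => fun x => x = gone
  | k'.+1 => normal_closure (fun x => exists n, (0 < n)%N /\ Ntor_k k' (gpow x n))
  end.

Definition Ntor (G : group) (x : G) : Prop := exists k, Ntor_k k x.

Definition is_partition (m n : nat) (P : {set {set 'I_m * 'I_n}}) : bool :=
  partition P [set: 'I_m * 'I_n].

Definition same_block (m n : nat) (P : {set {set 'I_m * 'I_n}}) (x y : 'I_m * 'I_n) : bool :=
  [exists E in P, (x \in E) && (y \in E)].

Definition pi_relations (H : group) (m n : nat) (P : {set {set 'I_m * 'I_n}})
    (a : 'I_m -> H) (b : 'I_n -> H) : Prop :=
  [/\ (forall i : 'I_m, val i = 0%N -> a i = gone),
      (forall j : 'I_n, val j = 0%N -> b j = gone) &
      (forall x y, same_block P x y -> gmul (a x.1) (b x.2) = gmul (a y.1) (b y.2))].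

(** (Gamma, a, b) is the group Gamma_pi with its canonical generators
    (universal property of the presentation) *)
Definition presents (Γ : group) (m n : nat) (P : {set {set 'I_m * 'I_n}})
    (a : 'I_m -> Γ) (b : 'I_n -> Γ) : Prop :=
  pi_relations P a b /\
  forall (H : group) (a' : 'I_m -> H) (b' : 'I_n -> H), pi_relations P a' b' ->
    exists f : Γ -> H,
      [/\ group_hom f, (forall i, f (a i) = a' i), (forall j, f (b j) = b' j) &
          forall g : Γ -> H, group_hom g -> (forall i, g (a i) = a' i) ->
            (forall j, g (b j) = b' j) -> forall x, g x = f x].

Definition nondegenerate_gens (Γ : group) (m n : nat) (a : 'I_m -> Γ) (b : 'I_n -> Γ) : Prop :=
  injective a /\ injective b.

Definition is_origin (m n : nat) (x : 'I_m * 'I_n) : bool :=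
  (val x.1 == 0%N) && (val x.2 == 0%N).

Definition realizable_with (K : unitRingType) (m n : nat) (P : {set {set 'I_m * 'I_n}})
    (r : 'I_m -> K) (s : 'I_n -> K) : Prop :=
  forall E, E \in P ->
    \sum_(x in E) r x.1 * s x.2 = (if [exists x in E, is_origin x] then 1 else 0).

Definition refines (m n : nat) (Q P : {set {set 'I_m * 'I_n}}) : bool :=
  [forall E in Q, [exists F in P, E \subset F]].

Definition minimally_realizable (K : unitRingType) (m n : nat) (P : {set {set 'I_m * 'I_n}}) : Prop :=
  exists (r : 'I_m -> K) (s : 'I_n -> K),
    [/\ (forall i, r i != 0), (forall j, s j != 0), realizable_with P r s &
        forall Q, is_partition Q -> realizable_with Q r s -> refines Q P -> Q = P].

Definition invariant_subgrid (m n : nat) (P : {set {set 'I_m * 'I_n}})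
    (R : {set 'I_m}) (C : {set 'I_n}) : Prop :=
  [/\ [exists i in R, val i == 0%N], [exists j in C, val j == 0%N],
      (2 <= #|R|)%N, (2 <= #|C|)%N &
      forall x y, x \in setX R C -> same_block P x y -> y \in setX R C].

Definition no_proper_invariant_subgrid (m n : nat) (P : {set {set 'I_m * 'I_n}}) : Prop :=
  forall R C, invariant_subgrid P R C -> ~ ((#|R| < m)%N \/ (#|C| < n)%N).

(** phi(a_i) = phi(a_i') for some i < i', or phi(b_j) = phi(b_j') for some j < j',
    phi : Gamma -> Gamma / N_tor(Gamma) *)
Definition gens_collapse_mod_Ntor (Γ : group) (m n : nat) (a : 'I_m -> Γ) (b : 'I_n -> Γ) : Prop :=
  (exists i i' : 'I_m, (i < i')%N /\ Ntor (gmul (ginv (a i)) (a i'))) \/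
  (exists j j' : 'I_n, (j < j')%N /\ Ntor (gmul (ginv (b j)) (b j'))).

(** * Group ring K[G]: an element is a function f : G -> K whose support is
    exactly the duplicate-free list s; its rank is size s. *)
Definition gr_elem (G : group) (K : unitRingType) (f : G -> K) (s : seq G) : Prop :=
  List.NoDup s /\ forall g, f g != 0 <-> List.In g s.

Definition gr_prod_is_one (G : group) (K : unitRingType) (fa : G -> K) (sa : seq G)
    (fb : G -> K) : Prop :=
  let c := fun x : G => \sum_(h <- sa) fa h * fb (gmul (ginv h) x) in
  c gone = 1 /\ forall x, x <> gone -> c x = 0.

(* Main.v *)
Require Import Defs.
From HB Require Import structures.
From mathcomp Require Import all_boot all_order all_algebra.
From mathcomp Require Import perm zify.
From Stdlib Require Import Lia ClassicalEpsilon ProofIrrelevance Classical FunctionalExtensionality PropExtensionality.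
Set Implicit Arguments. Unset Strict Implicit. Unset Printing Implicit Defensive.
Import GRing.Theory.
Local Open Scope ring_scope.


Lemma gmulg1 (G : group) (x : G) : gmul x gone = x /\ gmul x (ginv x) = gone.
Proof.
have mulV : gmul x (ginv x) = gone.
  rewrite -[gmul x (ginv x)]gmul1g -(gmulVg (ginv x)) -gmulA (gmulA (ginv x)).
  by rewrite gmulVg gmul1g gmulVg.
split=> //.
by rewrite -(gmulVg x) gmulA mulV gmul1g.
Qed.

Lemma gmul1 (G : group) (x : G) : gmul x gone = x.
Proof. exact: (gmulg1 x).1. Qed.
Lemma gmulV (G : group) (x : G) : gmul x (ginv x) = gone.
Proof. exact: (gmulg1 x).2. Qed.

Lemma ginv_uniq (G : group) (x y : G) : gmul y x = gone -> y = ginv x.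
Proof.
move=> h; by rewrite -[y]gmul1 -(gmulV x) gmulA h gmul1g.
Qed.

Lemma ginvK (G : group) (x : G) : ginv (ginv x) = x.
Proof. by symmetry; apply: ginv_uniq; rewrite gmulV. Qed.

Lemma ginvM (G : group) (x y : G) : ginv (gmul x y) = gmul (ginv y) (ginv x).
Proof.
symmetry; apply: ginv_uniq.
by rewrite -gmulA (gmulA (ginv x)) gmulVg gmul1g gmulVg.
Qed.

Lemma gmulI (G : group) (x y z : G) : gmul x y = gmul x z -> y = z.
Proof.
move=> h; by rewrite -[y]gmul1g -(gmulVg x) -gmulA h gmulA gmulVg gmul1g.
Qed.

Lemma gmulIr (G : group) (x y z : G) : gmul y x = gmul z x -> y = z.
Proof.
move=> h; by rewrite -[y]gmul1 -(gmulV x) gmulA h -gmulA gmulV gmul1.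
Qed.

Lemma hom1 (G H : group) (f : G -> H) : group_hom f -> f gone = gone.
Proof.
move=> hf; apply: (@gmulI _ (f gone)); by rewrite -hf gmul1 gmul1.
Qed.

Lemma homV (G H : group) (f : G -> H) : group_hom f -> forall x, f (ginv x) = ginv (f x).
Proof.
move=> hf x; apply: ginv_uniq; by rewrite -hf gmulVg hom1.
Qed.

Lemma hom_pow (G H : group) (f : G -> H) : group_hom f -> forall x n, f (gpow x n) = gpow (f x) n.
Proof.
move=> hf x; elim=> [|n IH] /=; first exact: hom1.
by rewrite hf IH.
Qed.

Lemma Ntor_k_triv (G H : group) (f : G -> H) : group_hom f -> torsion_free H ->
  forall k x, Ntor_k k x -> f x = gone.
Proof.
move=> hf tf; elim=> [|k IH] x /=.
  by move=> ->; apply: hom1.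
move=> hx; apply: (hx (fun y => f y = gone)).
- split.
  + exact: hom1.
  + by move=> u v hu hv; rewrite hf hu hv gmul1.
  + by move=> u hu; rewrite homV // hu -[ginv gone]gmul1g gmulV.
  + by move=> u g hu; rewrite !hf hu gmul1g homV // gmulVg.
- move=> y [n [hn hy]]; apply: (tf _ n hn).
  by rewrite -hom_pow //; apply: IH.
Qed.

Definition word (m n : nat) := seq (('I_m + 'I_n) * bool)%type.

Definition genv (H : group) m n (a : 'I_m -> H) (b : 'I_n -> H) (x : ('I_m + 'I_n)%type) : H :=
  match x with inl i => a i | inr j => b j end.

Definition letv (H : group) m n (a : 'I_m -> H) (b : 'I_n -> H) (l : (('I_m + 'I_n) * bool)%type) : H :=
  if l.2 then ginv (genv a b l.1) else genv a b l.1.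

Fixpoint evalw (H : group) m n (a : 'I_m -> H) (b : 'I_n -> H) (w : word m n) : H :=
  match w with [::] => gone | l :: w' => gmul (letv a b l) (evalw a b w') end.

Definition invw m n (w : word m n) : word m n := rev (map (fun l => (l.1, ~~ l.2)) w).

Lemma evalw_cat (H : group) m n (a : 'I_m -> H) (b : 'I_n -> H) (u v : word m n) :
  evalw a b (u ++ v) = gmul (evalw a b u) (evalw a b v).
Proof. elim: u => [|l u IH] /=; first by rewrite gmul1g. by rewrite IH gmulA. Qed.

Lemma evalw_inv (H : group) m n (a : 'I_m -> H) (b : 'I_n -> H) (w : word m n) :
  evalw a b (invw w) = ginv (evalw a b w).
Proof.
elim: w => [|l w IH] /=.
  by rewrite /invw /= -[ginv gone]gmul1g gmulV.
rewrite /invw map_cons rev_cons -cats1 evalw_cat -/(invw w) IH ginvM /= gmul1.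
by congr gmul; rewrite /letv /=; case: (l.2) => //=; rewrite ginvK.
Qed.

Definition weq m n (P : {set {set 'I_m * 'I_n}}) (u v : word m n) : Prop :=
  forall (H : group) (a : 'I_m -> H) (b : 'I_n -> H), pi_relations P a b -> evalw a b u = evalw a b v.

Definition Gam m n (P : {set {set 'I_m * 'I_n}}) : Type :=
  {c : word m n -> Prop | exists w, c = weq P w}.

Definition cls m n (P : {set {set 'I_m * 'I_n}}) (w : word m n) : Gam P :=
  exist _ (weq P w) (ex_intro _ w erefl).

Definition rep m n (P : {set {set 'I_m * 'I_n}}) (c : Gam P) : word m n :=
  proj1_sig (constructive_indefinite_description _ (proj2_sig c)).

Lemma cls_rep m n (P : {set {set 'I_m * 'I_n}}) (c : Gam P) : cls P (rep c) = c.
Proof.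
rewrite /rep; case: constructive_indefinite_description => w hw /=.
case: c hw => c pc /= hw; subst c; rewrite /cls; f_equal; apply: proof_irrelevance.
Qed.

Lemma cls_eq m n (P : {set {set 'I_m * 'I_n}}) (u v : word m n) : weq P u v -> cls P u = cls P v.
Proof.
move=> huv; rewrite /cls.
have e : weq P u = weq P v.
  apply: functional_extensionality => w; apply: propositional_extensionality.
  split=> h H a b hr; [rewrite -(huv H a b hr) | rewrite (huv H a b hr)]; exact: h.
move: (ex_intro _ u _); rewrite e => p; f_equal; apply: proof_irrelevance.
Qed.

Lemma cls_inj m n (P : {set {set 'I_m * 'I_n}}) (u v : word m n) : cls P u = cls P v -> weq P u v.
Proof.
move=> e; have : weq P u v.
  have -> : weq P u = weq P v by move: (f_equal (@proj1_sig _ _) e).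
  by move=> H a b hr.
by [].
Qed.

Lemma eval_rep m n (P : {set {set 'I_m * 'I_n}}) (w : word m n) (H : group) a b :
  pi_relations P a b -> @evalw H m n a b (rep (cls P w)) = evalw a b w.
Proof.
move=> hr; have := cls_inj (cls_rep (cls P w)); by move/(_ H a b hr).
Qed.


Definition Gmul m n (P : {set {set 'I_m * 'I_n}}) (c d : Gam P) : Gam P := cls P (rep c ++ rep d).
Definition Gone m n (P : {set {set 'I_m * 'I_n}}) : Gam P := cls P [::].
Definition Ginv m n (P : {set {set 'I_m * 'I_n}}) (c : Gam P) : Gam P := cls P (invw (rep c)).

Lemma GmulA m n (P : {set {set 'I_m * 'I_n}}) (x y z : Gam P) : Gmul x (Gmul y z) = Gmul (Gmul x y) z.
Proof.
apply: cls_eq => H a b hr; by rewrite !evalw_cat !eval_rep // !evalw_cat gmulA.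
Qed.

Lemma Gmul1g m n (P : {set {set 'I_m * 'I_n}}) (x : Gam P) : Gmul (Gone P) x = x.
Proof.
rewrite -[RHS]cls_rep; apply: cls_eq => H a b hr; by rewrite !evalw_cat !eval_rep //= gmul1g.
Qed.

Lemma GmulVg m n (P : {set {set 'I_m * 'I_n}}) (x : Gam P) : Gmul (Ginv x) x = Gone P.
Proof.
apply: cls_eq => H a b hr; by rewrite !evalw_cat !eval_rep //= evalw_inv gmulVg.
Qed.

Definition GamG m n (P : {set {set 'I_m * 'I_n}}) : group :=
  @Defs.Group (Gam P) (@Gmul m n P) (Gone P) (@Ginv m n P) (@GmulA m n P) (@Gmul1g m n P) (@GmulVg m n P).

Definition agen m n (P : {set {set 'I_m * 'I_n}}) (i : 'I_m) : GamG P := cls P [:: (inl i, false)].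
Definition bgen m n (P : {set {set 'I_m * 'I_n}}) (j : 'I_n) : GamG P := cls P [:: (inr j, false)].

Lemma pres_rel m n (P : {set {set 'I_m * 'I_n}}) : pi_relations P (@agen m n P) (@bgen m n P).
Proof.
split.
- move=> i hi; apply: cls_eq => H a b [ha hb hab] /=; by rewrite /letv /= ha // !gmul1.
- move=> j hj; apply: cls_eq => H a b [ha hb hab] /=; by rewrite /letv /= hb // !gmul1.
- move=> x y hxy; apply: cls_eq => H a b hr; rewrite !evalw_cat !eval_rep //= /letv /= !gmul1.
  by case: hr => _ _; apply.
Qed.

Definition evG m n (P : {set {set 'I_m * 'I_n}}) (H : group) (a : 'I_m -> H) (b : 'I_n -> H)
  (c : GamG P) : H := evalw a b (rep c).

Lemma evG_hom m n (P : {set {set 'I_m * 'I_n}}) (H : group) a b :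
  pi_relations P a b -> group_hom (@evG m n P H a b).
Proof. move=> hr x y; by rewrite /evG /= eval_rep // evalw_cat. Qed.

Lemma evG_a m n (P : {set {set 'I_m * 'I_n}}) (H : group) a b :
  pi_relations P a b -> forall i, @evG m n P H a b (agen P i) = a i.
Proof. move=> hr i; by rewrite /evG eval_rep //= /letv /= gmul1. Qed.

Lemma evG_b m n (P : {set {set 'I_m * 'I_n}}) (H : group) a b :
  pi_relations P a b -> forall j, @evG m n P H a b (bgen P j) = b j.
Proof. move=> hr j; by rewrite /evG eval_rep //= /letv /= gmul1. Qed.

Lemma presents_Gam m n (P : {set {set 'I_m * 'I_n}}) : presents P (@agen m n P) (@bgen m n P).
Proof.
split; first exact: pres_rel.
move=> H a b hr; exists (evG a b); split.
- exact: evG_hom.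
- exact: evG_a.
- exact: evG_b.
- move=> g hg ga gb x; rewrite -(cls_rep x) /evG eval_rep //.
  elim: (rep x) => [|l w IH] /=; first exact: (hom1 hg).
  have -> : cls P (l :: w) = gmul (cls P [:: l] : GamG P) (cls P w).
    apply: cls_eq => H' a' b' hr'; by rewrite /= evalw_cat !eval_rep //= gmul1.
  rewrite hg IH; congr gmul; case: l => x0 bb; rewrite /letv /=.
  have e : forall (c : GamG P), (match x0 with inl i => agen P i | inr j => bgen P j end) = c ->
      g c = genv a b x0.
    by move=> c <-; case: x0 => [i|j] /=; [rewrite ga|rewrite gb].
  case: bb.
  + have -> : cls P [:: (x0, true)] =
        ginv (match x0 with inl i => agen P i | inr j => bgen P j end : GamG P).
      apply: cls_eq => H' a' b' hr'.
      rewrite /= evalw_inv; case: x0 {e} => [i|j]; by rewrite /agen /bgen eval_rep //= /letv /= !gmul1.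
    by rewrite homV // (e _ erefl).
  + by apply: e; case: x0.
Qed.

Definition geqb {T : Type} (x y : T) : bool :=
  if excluded_middle_informative (x = y) then true else false.

Lemma geqbP (T : Type) (x y : T) : reflect (x = y) (geqb x y).
Proof. rewrite /geqb; case: excluded_middle_informative => h; by constructor. Qed.

Lemma exists_min (T : Type) (C : T -> Prop) (f : T -> nat) :
  (exists x, C x) -> exists x, C x /\ forall y, C y -> (f x <= f y)%N.
Proof.
case=> x0 hx0.
suff : forall k x, (f x <= k)%N -> C x -> exists x, C x /\ forall y, C y -> (f x <= f y)%N.
  by move/(_ (f x0) x0 (leqnn _) hx0).
elim=> [|k IH] x hk hx.
  by exists x; split=> // y _; move: hk; rewrite leqn0 => /eqP ->.
case: (classic (forall y, C y -> (f x <= f y)%N)) => [h|h]; first by exists x.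
have [y hy] : exists y, ~ (C y -> (f x <= f y)%N).
  by apply: not_all_ex_not.
have [hcy hfy] : C y /\ ~~ (f x <= f y)%N.
  split; first by apply: NNPP => hc; apply: hy => /hc.
  by apply/negP => hle; apply: hy.
apply: (IH y) => //; rewrite -ltnS; apply: leq_trans hk; by rewrite ltnNge.
Qed.

Lemma sb_refines m n (Q P : {set {set 'I_m * 'I_n}}) x y :
  refines Q P -> same_block Q x y -> same_block P x y.
Proof.
move=> /forallP hr /existsP [E /andP [hE /andP [hx hy]]].
move: (hr E); rewrite hE /= => /existsP [F /andP [hF /subsetP hs]].
apply/existsP; exists F; by rewrite hF (hs _ hx) (hs _ hy).
Qed.

Lemma refines_trans m n (Q P R : {set {set 'I_m * 'I_n}}) :
  refines Q P -> refines P R -> refines Q R.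
Proof.
move=> /forallP h1 /forallP h2; apply/forallP => E; apply/implyP => hE.
move: (h1 E); rewrite hE /= => /existsP [F /andP [hF hEF]].
move: (h2 F); rewrite hF /= => /existsP [F' /andP [hF' hFF]].
apply/existsP; exists F'; by rewrite hF' (subset_trans hEF hFF).
Qed.

Lemma part_block m n (P : {set {set 'I_m * 'I_n}}) E x y :
  is_partition P -> E \in P -> x \in E -> same_block P x y = (y \in E).
Proof.
move=> /and3P [_ /trivIsetP ht _] hE hx.
apply/existsP/idP => [[F /andP [hF /andP [hxF hyF]]]|hy].
  case: (eqVneq E F) => [->//|ne].
  by move: (disjointFr (ht _ _ hE hF ne) hx); rewrite hxF.
by exists E; rewrite hE hx hy.
Qed.

Lemma part_cover m n (P : {set {set 'I_m * 'I_n}}) x :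
  is_partition P -> exists2 E, E \in P & x \in E.
Proof.
move=> /and3P [/eqP hc _ _].
have : x \in cover P by rewrite hc inE.
by move/bigcupP.
Qed.

Lemma part_sub m n (Q P : {set {set 'I_m * 'I_n}}) :
  is_partition Q -> is_partition P -> (forall x y, same_block Q x y = same_block P x y) ->
  Q \subset P.
Proof.
move=> hQ hP hsb; apply/subsetP => E hE.
have : E != set0 by apply/negP => /eqP e; move: hQ => /and3P [_ _]; rewrite -e hE.
case/set0Pn => x hx.
have [F hF hxF] := part_cover x hP.
suff -> : E = F by [].
apply/setP => y; by rewrite -(part_block y hQ hE hx) -(part_block y hP hF hxF) hsb.
Qed.

Lemma part_sb_eq m n (Q P : {set {set 'I_m * 'I_n}}) :
  is_partition Q -> is_partition P -> (forall x y, same_block Q x y = same_block P x y) ->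
  Q = P.
Proof.
move=> hQ hP hsb; apply/eqP; rewrite eqEsubset (part_sub hQ hP hsb) (part_sub hP hQ) //.
Qed.

Definition sbset m n (Q : {set {set 'I_m * 'I_n}}) : {set ('I_m * 'I_n) * ('I_m * 'I_n)} :=
  [set pq | same_block Q pq.1 pq.2].

Lemma refines_eq m n (Q P : {set {set 'I_m * 'I_n}}) :
  is_partition Q -> is_partition P -> refines Q P -> (#|sbset P| <= #|sbset Q|)%N -> Q = P.
Proof.
move=> hQ hP hr hc.
have hs : sbset Q \subset sbset P.
  apply/subsetP => pq; rewrite !inE; exact: sb_refines.
have := subset_leqif_cards hs; case=> _ /esym; rewrite eqn_leq hc.
rewrite (subset_leq_card hs) /= => /eqP e.
apply: part_sb_eq => // x y.
by move/setP: e => /(_ (x, y)); rewrite !inE.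
Qed.

Lemma is_originE m n (o p : 'I_m * 'I_n) : val o.1 = 0%N -> val o.2 = 0%N -> is_origin p = (p == o).
Proof.
case: o => i0 j0 /= h1 h2; case: p => a b.
by rewrite /is_origin /= xpair_eqE -!val_eqE /= h1 h2.
Qed.

Lemma subgrid_sum (K : unitRingType) (G : group) m n (P : {set {set 'I_m * 'I_n}})
  (g : 'I_m -> G) (h : 'I_n -> G) (r : 'I_m -> K) (s : 'I_n -> K) (i0 : 'I_m) (j0 : 'I_n) :
  is_partition P -> realizable_with P r s ->
  (forall x y, same_block P x y -> gmul (g x.1) (h x.2) = gmul (g y.1) (h y.2)) ->
  val i0 = 0%N -> val j0 = 0%N -> gmul (g i0) (h j0) = gone ->
  forall R C, invariant_subgrid P R C -> forall x : G,
  \sum_(i in R) \sum_(j in C | geqb (gmul (g i) (h j)) x) r i * s j =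
    (if geqb x gone then 1 else 0).
Proof.
move=> hP hre hsb hi0 hj0 horig R C [hR0 hC0 _ _ hinv] x.
set o := (i0, j0).
set gh := fun p : 'I_m * 'I_n => gmul (g p.1) (h p.2).
set D := [set p in setX R C | geqb (gh p) x].
rewrite pair_big_dep.
rewrite (eq_bigl (fun p => p \in D)); last first.
  by move=> [a b]; rewrite !inE /= andbA.
set Px := [set E in P | E \subset D].
have hcov : cover Px = D.
  apply/setP => p; apply/bigcupP/idP => [[E]|hp].
    by rewrite inE => /andP [_ /subsetP hs] /hs.
  have [E hE hpE] := part_cover p hP.
  exists E => //; rewrite inE hE /=; apply/subsetP => q hq.
  have hpq : same_block P p q by rewrite (part_block q hP hE hpE).
  move: hp; rewrite inE => /andP [hp1 hp2].
  have hq1 := hinv p q hp1 hpq.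
  rewrite inE hq1 /=; apply/geqbP; move/geqbP: hp2 => <-; by rewrite /gh -(hsb _ _ hpq).
have htr : trivIset Px.
  apply: (trivIsetS (Q := P)); first by apply/subsetP => E; rewrite inE => /andP [].
  by case/and3P: hP.
rewrite -hcov (big_trivIset _ htr) /=.
have -> : \sum_(E in Px) \sum_(p in E) r p.1 * s p.2 = \sum_(E in Px) (if o \in E then (1 : K) else 0).
  apply: eq_bigr.
  move=> E; rewrite inE => /andP [hE _]; rewrite (hre E hE); congr (if _ then _ else _).
  apply/existsP/idP => [[p /andP [hp]]|ho]; last first.
    by exists o; rewrite ho (@is_originE _ _ o o hi0 hj0) eqxx.
  by rewrite (@is_originE _ _ o p hi0 hj0) => /eqP <-.
have [E0 hE0 hoE0] := part_cover o hP.
have hE0i : forall E, E \in P -> (o \in E) = (E == E0).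
  move=> E hE; apply/idP/eqP => [hoE|-> //].
  apply/setP => q; by rewrite -(part_block q hP hE hoE) -(part_block q hP hE0 hoE0).
have hoRC : o \in setX R C.
  rewrite inE /=; apply/andP; split.
    case/existsP: hR0 => i /andP [hi /eqP hi']; suff -> : i0 = i by [].
    by apply: val_inj; rewrite hi0 hi'.
  case/existsP: hC0 => j /andP [hj /eqP hj']; suff -> : j0 = j by [].
  by apply: val_inj; rewrite hj0 hj'.
case: (geqbP x gone) => [ex|nx].
- have hE0P : E0 \in Px.
    rewrite inE hE0 /=; apply/subsetP => q hq.
    have hoq : same_block P o q by rewrite (part_block q hP hE0 hoE0).
    rewrite inE (hinv o q hoRC hoq) /=; apply/geqbP.
    by rewrite /gh -(hsb _ _ hoq) ex.
  rewrite (bigD1 E0) //= hoE0 big1; first by rewrite addr0.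
  move=> E /andP [hE ne]; move: hE; rewrite inE => /andP [hE _].
  by rewrite hE0i // (negbTE ne).
- rewrite big1 // => E; rewrite inE => /andP [hE hsub].
  case: ifP => // hoE; exfalso; apply: nx.
  move/subsetP: hsub => /(_ o hoE); rewrite inE => /andP [_ /geqbP <-].
  exact: horig.
Qed.

Definition prod_one (G : group) (K : unitRingType) m n (g : 'I_m -> G) (h : 'I_n -> G)
  (r : 'I_m -> K) (s : 'I_n -> K) : Prop :=
  forall x : G, \sum_(i < m) \sum_(j < n | geqb (gmul (g i) (h j)) x) r i * s j =
    (if geqb x gone then 1 else 0).

Definition good (G : group) (K : unitRingType) m n (g : 'I_m -> G) (h : 'I_n -> G)
  (r : 'I_m -> K) (s : 'I_n -> K) : Prop :=
  [/\ injective g, injective h, (forall i, r i != 0), (forall j, s j != 0) & prod_one g h r s].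

Lemma gcancel_inv (G : group) (u v : G) : gmul (ginv u) v = gone -> v = u.
Proof. by rewrite -(gmulVg u) => /gmulI. Qed.

Lemma main_step (K : unitRingType) (G : group) (tf : torsion_free G) m n
  (hm : (2 <= m)%N) (hn : (2 <= n)%N)
  (g : 'I_m -> G) (h : 'I_n -> G) (r : 'I_m -> K) (s : 'I_n -> K) (hg : good g h r s)
  (i0 : 'I_m) (j0 : 'I_n) (hi0 : val i0 = 0%N) (hj0 : val j0 = 0%N)
  (horig : gmul (g i0) (h j0) = gone)
  (IH : forall m' n', (2 <= m')%N -> (2 <= n')%N -> (m' <= m)%N -> (n' <= n)%N ->
      (m' + n' < m + n)%N ->
      forall (g' : 'I_m' -> G) (h' : 'I_n' -> G) (r' : 'I_m' -> K) (s' : 'I_n' -> K),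
        ~ good g' h' r' s')
  (Hmn : forall P : {set {set 'I_m * 'I_n}}, is_partition P ->
       forall (Γ : group) (a : 'I_m -> Γ) (b : 'I_n -> Γ),
         presents P a b -> nondegenerate_gens a b ->
         minimally_realizable K P -> no_proper_invariant_subgrid P ->
         gens_collapse_mod_Ntor a b) : False.
Proof.
case: hg => ginj hinj rnz snz hprod.
pose gh := fun p : 'I_m * 'I_n => gmul (g p.1) (h p.2).
pose Rg : rel ('I_m * 'I_n) := fun p q => geqb (gh p) (gh q).
have eqR : {in setT & &, equivalence_rel Rg}.
  move=> x y z _ _ _; split; first by apply/geqbP.
  move/geqbP => hxy; apply/geqbP/geqbP => [<-|<-] //.
pose P0 := equivalence_partition Rg setT.
have hP0 : is_partition P0 := equivalence_partitionP eqR.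
have hsb0 : forall x y, same_block P0 x y -> gh x = gh y.
  move=> x y /existsP [E /andP [/imsetP [w _ ->] /andP]].
  by rewrite !inE /= => [[/geqbP <- /geqbP <-]].
set o := (i0, j0).
have hre0 : realizable_with P0 r s.
  move=> E /imsetP [w _ ->].
  have := hprod (gh w); rewrite pair_big_dep /= => e.
  have -> : [exists x in [set y in setT | Rg w y], is_origin x] = geqb (gh w) gone.
    apply/existsP/geqbP => [[p /andP [hp]]|hw].
      rewrite (@is_originE _ _ o p hi0 hj0) => /eqP ep; subst p.
      by move: hp; rewrite !inE /= => /geqbP ->.
    exists o; rewrite (@is_originE _ _ o o hi0 hj0) eqxx !inE andbT; rewrite /Rg; apply/geqbP; by rewrite hw /gh /= horig.
  rewrite -e; apply: eq_bigl => p; rewrite !inE /=.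
  by apply/geqbP/geqbP.
pose Cond := fun Q => [/\ is_partition Q, realizable_with Q r s & refines Q P0].
have [pi [[hpi hrepi hrefpi] hmin]] : exists pi, Cond pi /\
    forall Q, Cond Q -> (#|sbset pi| <= #|sbset Q|)%N.
  apply: exists_min; exists P0; split => //.
  apply/forallP => E; apply/implyP => hE; apply/existsP; exists E; by rewrite hE subxx.
have hsbpi : forall x y, same_block pi x y -> gh x = gh y.
  by move=> x y hxy; apply: hsb0; apply: sb_refines hxy.
pose a' := fun i => gmul (g i) (h j0).
pose b' := fun j => gmul (ginv (h j0)) (h j).
have hrel : pi_relations pi a' b'.
  split.
  - move=> i hi; have -> : i = i0 by apply: val_inj; rewrite hi hi0.
    exact: horig.
  - move=> j hj; have -> : j = j0 by apply: val_inj; rewrite hj hj0.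
    exact: gmulVg.
  - move=> x y hxy; rewrite /a' /b' -!gmulA !(gmulA (h j0)) !gmulV !gmul1g.
    exact: hsbpi.
pose f := evG (P := pi) a' b'.
have fhom : group_hom f := evG_hom hrel.
have fa : forall i, f (agen pi i) = a' i := evG_a hrel.
have fb : forall j, f (bgen pi j) = b' j := evG_b hrel.
have a'inj : forall i i', a' i = a' i' -> i = i'.
  by move=> i i' /gmulIr /ginj.
have hnd : nondegenerate_gens (agen pi) (bgen pi).
  split.
  + by move=> i i' e; apply: a'inj; rewrite -!fa e.
  + move=> j j' e; apply: hinj; apply: (@gmulI _ (ginv (h j0))).
    by rewrite -/(b' j) -/(b' j') -!fb e.
have hmr : minimally_realizable K pi.
  exists r, s; split => //.
  move=> Q hQ hreQ hrQ; apply: refines_eq => //.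
  apply: hmin; split => //; exact: refines_trans hrQ hrefpi.
have hnp : no_proper_invariant_subgrid pi.
  move=> R C hinv hprop.
  have hinv' := hinv; case: hinv' => _ _ hR2 hC2 _.
  have hRm : (#|R| <= m)%N by apply: leq_trans (max_card _) _; rewrite card_ord.
  have hCn : (#|C| <= n)%N by apply: leq_trans (max_card _) _; rewrite card_ord.
  apply: (IH #|R| #|C| hR2 hC2 hRm hCn _ (fun i => g (enum_val i)) (fun j => h (enum_val j))
    (fun i => r (enum_val i)) (fun j => s (enum_val j))).
    by case: hprop => hp; lia.
  split.
  + by move=> i i' /ginj /enum_val_inj.
  + by move=> j j' /hinj /enum_val_inj.
  + by move=> i.
  + by move=> j.
  + move=> x; rewrite -(subgrid_sum hpi hrepi hsbpi hi0 hj0 horig hinv x).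
    rewrite [RHS]big_enum_val; apply: eq_bigr => i _.
    by rewrite [RHS]big_enum_val_cond.
case: (Hmn pi hpi (GamG pi) (agen pi) (bgen pi) (presents_Gam pi) hnd hmr hnp).
- move=> [i [i' [hii' hN]]].
  + case: hN => k hk; have := Ntor_k_triv fhom tf hk.
    rewrite fhom homV // !fa => /gcancel_inv /a'inj e.
    by move: hii'; rewrite e ltnn.
- move=> [j [j' [hjj' hN]]].
  + case: hN => k hk; have := Ntor_k_triv fhom tf hk.
    rewrite fhom homV // !fb => /gcancel_inv e.
    have := gmulI e => /hinj e'.
    by move: hjj'; rewrite e' ltnn.
Qed.

Lemma good_swap (G : group) (K : unitRingType) m n (g : 'I_m -> G) (h : 'I_n -> G)
  (r : 'I_m -> K) (s : 'I_n -> K) (i0 : 'I_m) (j0 : 'I_n) :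
  good g h r s -> exists g' h' r' s', @good G K m n g' h' r' s' /\ gmul (g' i0) (h' j0) = gone.
Proof.
case=> ginj hinj rnz snz hprod.
have [ia [jb e]] : exists i j, gmul (g i) (h j) = gone.
  apply: NNPP => hn.
  have := hprod gone; rewrite big1.
    case: (geqbP gone gone) => // _ /esym/eqP; by rewrite oner_eq0.
  move=> i _; apply: big_pred0 => j; apply/negbTE/negP => /geqbP ej.
  by apply: hn; exists i, j.
pose si := tperm i0 ia; pose sj := tperm j0 jb.
exists (fun i => g (si i)), (fun j => h (sj j)), (fun i => r (si i)), (fun j => s (sj j)).
split; last by rewrite /si /sj !tpermL.
split.
- by move=> i i' /ginj /perm_inj.
- by move=> j j' /hinj /perm_inj.
- by move=> i.
- by move=> j.
- move=> x; rewrite -(hprod x).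
  rewrite [RHS](reindex_inj (@perm_inj _ si)); apply: eq_bigr => i _.
  by rewrite [RHS](reindex_inj (@perm_inj _ sj)).
Qed.

Lemma core (K : unitRingType) (G : group) (tf : torsion_free G) (M N : nat)
  (H : forall m n : nat, (2 <= m <= M)%N -> (2 <= n <= N)%N ->
       forall P : {set {set 'I_m * 'I_n}}, is_partition P ->
       forall (Γ : group) (a : 'I_m -> Γ) (b : 'I_n -> Γ),
         presents P a b -> nondegenerate_gens a b ->
         minimally_realizable K P -> no_proper_invariant_subgrid P ->
         gens_collapse_mod_Ntor a b) :
  forall k m n, (m + n <= k)%N -> (2 <= m <= M)%N -> (2 <= n <= N)%N ->
  forall (g : 'I_m -> G) (h : 'I_n -> G) (r : 'I_m -> K) (s : 'I_n -> K), ~ good g h r s.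
Proof.
elim=> [|k IH] m n hk hm hn g h r s hg; first by lia.
have hm0 : (0 < m)%N by lia.
have hn0 : (0 < n)%N by lia.
have [g' [h' [r' [s' [hg' ho]]]]] := good_swap (Ordinal hm0) (Ordinal hn0) hg.
have hm2 : (2 <= m)%N by lia.
have hn2 : (2 <= n)%N by lia.
apply: (main_step tf hm2 hn2 hg' (i0 := Ordinal hm0) (j0 := Ordinal hn0)) => //.
- move=> m' n' h1 h2 h3 h4 h5; apply: (IH m' n'); lia.
- exact: H.
Qed.

Lemma size_length (T : Type) (s : seq T) : size s = List.length s.
Proof. by elim: s => //= x s ->. Qed.

Lemma nth_nth (T : Type) (x0 : T) (s : seq T) i : nth x0 s i = List.nth i s x0.
Proof. by elim: s i => [|x s IH] [|i] //=. Qed.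

Lemma nth_inj (T : Type) (d : T) (s : seq T) (K : nat) :
  size s = K -> List.NoDup s -> injective (fun i : 'I_K => List.nth i s d).
Proof.
move=> hs nd i i' e; apply: ord_inj.
have l1 : (i < length s)%coq_nat by apply/ltP; rewrite -size_length hs.
have l2 : (i' < length s)%coq_nat by apply/ltP; rewrite -size_length hs.
exact: (proj1 (List.NoDup_nth s d) nd _ _ l1 l2 e).
Qed.

Lemma translate (G : group) (K : unitRingType) (M N : nat)
  (fa : G -> K) (sa : seq G) (fb : G -> K) (sb : seq G) :
  gr_elem fa sa -> size sa = M -> gr_elem fb sb -> size sb = N -> gr_prod_is_one fa sa fb ->
  @good G K M N (fun i => List.nth i sa gone) (fun j => List.nth j sb gone)
    (fun i => fa (List.nth i sa gone)) (fun j => fb (List.nth j sb gone)).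
Proof.
move=> [nda ha] hsa [ndb hb] hsb [p1 p0].
have ginj := @nth_inj _ gone _ _ hsa nda.
have hinj := @nth_inj _ gone _ _ hsb ndb.
have ain : forall i : 'I_M, List.In (List.nth i sa gone) sa.
  move=> i; apply: List.nth_In; apply/ltP; by rewrite -size_length hsa.
have bin : forall j : 'I_N, List.In (List.nth j sb gone) sb.
  move=> j; apply: List.nth_In; apply/ltP; by rewrite -size_length hsb.
split => //.
- by move=> i; apply/(ha _).2.
- by move=> j; apply/(hb _).2.
move=> x.
set g := fun i : 'I_M => List.nth i sa gone.
set h := fun j : 'I_N => List.nth j sb gone.
have hc : \sum_(y <- sa) fa y * fb (gmul (ginv y) x) =
    \sum_(i < M) \sum_(j < N | geqb (gmul (g i) (h j)) x) fa (g i) * fb (h j).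
  rewrite (big_nth gone) hsa big_mkord; apply: eq_bigr => i _.
  rewrite -big_distrr /= nth_nth -/(g i); congr (_ * _).
  case: (classic (exists j, gmul (g i) (h j) = x)) => [[j ej]|nj].
    rewrite (big_pred1 j).
      by rewrite -ej gmulA gmulVg gmul1g.
    move=> j'; apply/geqbP/eqP => [e|->//]; apply: hinj.
    by apply: (@gmulI _ (g i)); rewrite e ej.
  rewrite big_pred0; last first.
    move=> j; apply/negbTE/negP => /geqbP ej; by apply: nj; exists j.
  apply/eqP; apply: contraT => hnz.
  have /(List.In_nth _ _ gone) [k [hk ek]] := (hb _).1 hnz.
  have hkN : (k < N)%N by rewrite -hsb size_length; apply/ltP.
  exfalso; apply: nj; exists (Ordinal hkN).
  by rewrite /h /= ek gmulA gmulV gmul1g.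
rewrite -hc; case: (geqbP x gone) => [->|nx]; first exact: p1.
exact: p0.
Qed.

Unset Implicit Arguments.
Set Strict Implicit.
Theorem theorem6p11 (K : unitRingType)
  (hK : forall x : K, x != 0 -> x \is a GRing.unit)
  (M N : nat) (hM : (2 <= M)%N) (hN : (2 <= N)%N)
  (H : forall m n : nat, (2 <= m <= M)%N -> (2 <= n <= N)%N ->
       forall P : {set {set 'I_m * 'I_n}}, is_partition P ->
       forall (Γ : group) (a : 'I_m -> Γ) (b : 'I_n -> Γ),
         presents P a b -> nondegenerate_gens a b ->
         minimally_realizable K P -> no_proper_invariant_subgrid P ->
         gens_collapse_mod_Ntor a b) :
  forall G : group, torsion_free G ->
    ~ exists (fa : G -> K) (sa : seq G) (fb : G -> K) (sb : seq G),
        [/\ gr_elem fa sa, size sa = M, gr_elem fb sb, size sb = N &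
            gr_prod_is_one fa sa fb].
Proof.
move=> G tf [fa [sa [fb [sb [ha hsa hb hsb hp]]]]].
apply: (core tf H (k := (M + N)%N) (leqnn _)); first by rewrite hM leqnn.
  by rewrite hN leqnn.
exact: translate ha hsa hb hsb hp.
Qed.
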